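(* Let $(N,+,* )$ be a nilpotent ring with adjoint operation $x\circ y=x+y+x*y$, let $S$ be a subring and $I$ a two-sided ideal of $N$ with $S\cap I=\{0\}$ and $N=S+I$. Then every $x\in N$ can be written uniquely as $x=s\circ i$ with $s\in S$, $i\in I$; define $x\bullet y=s\circ y\circ i$, so that $(N,+,\bullet)$ is a left brace, and let $r(x,y)=(\sigma_x(y),\tau_y(x))$ be its Yang–Baxter map. Let $X\subseteq N$ be such that $(X,r)$ is a solution of the set-theoretic Yang–Baxter equation, and let $J\subseteq I\cap X$ be a two-sided ideal of the ring $N$. Let $f,g:X\to X$ and $\wedge:X\times X\to X$ be maps and put $k(x)=f(x)\wedge g(x)$. Suppose that: $f$ is $\mathcal G(X,r)$-equivariant; $\sigma_x(y\wedge g(z))=\sigma_x(y)\wedge g(z)$ for all $x,y,z\in X$; $g(x+j)=g(x)$ whenever $x\in X$, $j\in J$, $x+j\in X$; and $k(x)-x\in J$ for all $x\in X$. Then $k$ is a reflection of $(X,r)$.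
   Context: A (left) brace is a triple $(B,+,\circ)$ with $(B,+)$ abelian group, $(B,\circ)$ group, and $x\circ(y+z)=x\circ y+x\circ z-x$. The Yang–Baxter map of the brace $(N,+,\bullet)$ is $r(x,y)=(\sigma_x(y),\tau_y(x))$ with $\sigma_x(y)=x\bullet y-x$ and $\tau_y(x)=(\sigma_x(y))^{-1}\bullet x-(\sigma_x(y))^{-1}$, inverses taken in $(N,\bullet)$. For $X\subseteq N$, $(X,r)$ is a solution of the set-theoretic Yang–Baxter equation if $r(X\times X)\subseteq X\times X$ and $(\mathrm{id}\times r)(r\times\mathrm{id})(\mathrm{id}\times r)=(r\times\mathrm{id})(\mathrm{id}\times r)(r\times\mathrm{id})$ on $X^3$. A map $k:X\to X$ is a reflection of $(X,r)$ if $r(\mathrm{id}\times k)r(\mathrm{id}\times k)=(\mathrm{id}\times k)r(\mathrm{id}\times k)r$ on $X\times X$; $k$ is $\mathcal G(X,r)$-equivariant if $k\sigma_x=\sigma_x k$ on $X$ for every $x\in X$. *)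

(* Defs.v *)
(* (additive group = zmodType; the non-unital ring product is
   an explicit operation since a nilpotent ring has no unit). *)
From HB Require Import structures.
From mathcomp Require Import all_boot all_order all_algebra.
From Stdlib Require Import ClassicalEpsilon.
Set Implicit Arguments. Unset Strict Implicit. Unset Printing Implicit Defensive.
Import GRing.Theory.
Local Open Scope ring_scope.

Section Defs.
Variables (N : zmodType) (mul : N -> N -> N).

Record nilpotent_ring : Prop := NilpotentRing {
  nr_assoc : forall x y z, mul x (mul y z) = mul (mul x y) z;
  nr_distl : forall x y z, mul (x + y) z = mul x z + mul y z;
  nr_distr : forall x y z, mul x (y + z) = mul x y + mul x z;
  nr_nilp  : exists n : nat, forall (x : N) (s : seq N),
               size s = n -> foldl mul x s = 0 }.

Record is_subring (S : N -> Prop) : Prop := IsSubring {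
  sr0 : S 0;
  srB : forall x y, S x -> S y -> S (x - y);
  srM : forall x y, S x -> S y -> S (mul x y) }.

Record is_ideal (I : N -> Prop) : Prop := IsIdeal {
  id0 : I 0;
  idB : forall x y, I x -> I y -> I (x - y);
  idMl : forall x y, I y -> I (mul x y);
  idMr : forall x y, I x -> I (mul x y) }.

Definition adj (x y : N) : N := x + y + mul x y.

Variables (S I : N -> Prop).

Definition decomp (x : N) : N * N :=
  epsilon (inhabits (0, 0)) (fun p => S p.1 /\ I p.2 /\ x = adj p.1 p.2).

Definition bul (x y : N) : N := adj (adj (decomp x).1 y) (decomp x).2.

Definition binv (x : N) : N :=
  epsilon (inhabits 0) (fun y => bul y x = 0 /\ bul x y = 0).

Definition sigma (x y : N) : N := bul x y - x.
Definition tau (y x : N) : N :=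
  bul (binv (sigma x y)) x - binv (sigma x y).

Definition ybr (p : N * N) : N * N := (sigma p.1 p.2, tau p.2 p.1).

End Defs.

Definition r12 {N : Type} (r : N * N -> N * N) (t : N * N * N) : N * N * N :=
  ((r (t.1.1, t.1.2)).1, (r (t.1.1, t.1.2)).2, t.2).
Definition r23 {N : Type} (r : N * N -> N * N) (t : N * N * N) : N * N * N :=
  (t.1.1, (r (t.1.2, t.2)).1, (r (t.1.2, t.2)).2).

Definition is_solution {N : Type} (X : N -> Prop) (r : N * N -> N * N) : Prop :=
  (forall x y, X x -> X y -> X (r (x, y)).1 /\ X (r (x, y)).2) /\
  (forall a b c, X a -> X b -> X c ->
     r23 r (r12 r (r23 r (a, b, c))) = r12 r (r23 r (r12 r (a, b, c)))).

Definition idk {N : Type} (k : N -> N) (p : N * N) : N * N := (p.1, k p.2).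

Definition is_reflection {N : Type} (X : N -> Prop) (r : N * N -> N * N)
  (k : N -> N) : Prop :=
  forall x y, X x -> X y ->
    r (idk k (r (idk k (x, y)))) = idk k (r (idk k (r (x, y)))).

(* Main.v *)
Require Import Defs.
From mathcomp Require Import all_boot all_order all_algebra.
From Stdlib Require Import ClassicalEpsilon.
Set Implicit Arguments. Unset Strict Implicit. Unset Printing Implicit Defensive.
Import GRing.Theory.
Local Open Scope ring_scope.

Section Basics.
Variables (N : zmodType) (mul : N -> N -> N).
Hypothesis Hn : nilpotent_ring mul.

Let mA := nr_assoc Hn.
Let mDl := nr_distl Hn.
Let mDr := nr_distr Hn.

Lemma mul0l x : mul 0 x = 0.
Proof. have h := mDl 0 0 x; rewrite addr0 -{1}(addr0 (mul 0 x)) in h.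
exact: esym (addrI _ h). Qed.
Lemma mul0r x : mul x 0 = 0.
Proof. have h := mDr x 0 0; rewrite addr0 -{1}(addr0 (mul x 0)) in h.
exact: esym (addrI _ h). Qed.
Lemma mulNl x y : mul (- x) y = - mul x y.
Proof. apply: (addrI (mul x y)); by rewrite -mDl !subrr mul0l. Qed.
Lemma mulNr x y : mul x (- y) = - mul x y.
Proof. apply: (addrI (mul x y)); by rewrite -mDr !subrr mul0r. Qed.
Lemma mulBl x y z : mul (x - y) z = mul x z - mul y z.
Proof. by rewrite mDl mulNl. Qed.
Lemma mulBr x y z : mul x (y - z) = mul x y - mul x z.
Proof. by rewrite mDr mulNr. Qed.

Local Notation adj := (adj mul).

Lemma adj0l x : adj 0 x = x.
Proof. by rewrite /Defs.adj mul0l add0r addr0. Qed.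
Lemma adj0r x : adj x 0 = x.
Proof. by rewrite /Defs.adj mul0r !addr0. Qed.
Lemma adjA x y z : adj (adj x y) z = adj x (adj y z).
Proof.
rewrite /Defs.adj !mDl !mDr mA !addrA.
by rewrite [LHS](ACl (1*2*4*6*3*5*7)%AC).
Qed.

Lemma foldl_pw (t : N) k :
  foldl mul t (nseq k.+1 t) = mul (foldl mul t (nseq k t)) t.
Proof.
have -> : nseq k.+1 t = rcons (nseq k t) t by elim: k => //= k ->.
by rewrite foldl_rcons.
Qed.

Lemma iter_pw (t d : N) k :
  iter k.+1 (mul t) d = mul (foldl mul t (nseq k t)) d.
Proof.
elim: k d => [|k IH] d //.
by rewrite iterSr IH foldl_pw mA.
Qed.

Lemma solve_lin (K : N -> Prop) s b :
  (forall u v, K u -> K v -> K (u - v)) -> (forall u, K u -> K (mul s u)) ->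
  K b -> exists q, K q /\ q + mul s q = b.
Proof.
move=> KB KM Kb.
have [n Hnil] := nr_nilp Hn.
pose F := fun q => b - mul s q.
pose qf k := iter k F b.
have Kq k : K (qf k) by elim: k => //= k IH; apply: KB => //; apply: KM.
have He k : qf k.+1 - qf k = iter k.+1 (mul (- s)) b.
  elim: k => [|k IH].
    by rewrite /qf /= /F addrC addKr mulNl.
  rewrite iterS -IH /qf /= /F.
  move: (iter k _ b) => B.
  rewrite mulNl [in RHS]mulBr !opprB [LHS](AC (2*2) ((1*4)*3*2)) /= subrr add0r.
  done.
apply: (@ex_intro _ _ (iter n F b)); split; first exact: Kq n.
have := He n; rewrite iter_pw Hnil ?size_nseq // mul0l => /eqP.
rewrite subr_eq0 => /eqP H.
have H' : F (iter n F b) = iter n F b := H.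
by rewrite -{1}H' /F subrK.
Qed.

End Basics.

Section Brace.
Variables (N : zmodType) (mul : N -> N -> N).
Hypothesis Hn : nilpotent_ring mul.
Variables (S I : N -> Prop).
Hypothesis HS : is_subring mul S.
Hypothesis HI : is_ideal mul I.
Hypothesis HSI : forall x, S x -> I x -> x = 0.
Hypothesis Hsum : forall x, exists s i, S s /\ I i /\ x = s + i.

Let mA := nr_assoc Hn.
Let mDl := nr_distl Hn.
Let mDr := nr_distr Hn.
Local Notation adj := (adj mul).

Lemma KN (K : N -> Prop) : (forall u v, K u -> K v -> K (u - v)) ->
  forall u, K u -> K (- u).
Proof. by move=> KB u Ku; rewrite -sub0r; apply: (KB) => //; rewrite -(subrr u); apply: (KB). Qed.
Lemma KD (K : N -> Prop) : (forall u v, K u -> K v -> K (u - v)) ->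
  forall u v, K u -> K v -> K (u + v).
Proof. by move=> KB u v Ku Kv; rewrite -(opprK v); apply: (KB) => //; apply: KN. Qed.

Lemma adj_inv (K : N -> Prop) s :
  (forall u v, K u -> K v -> K (u - v)) -> (forall u v, K u -> K v -> K (mul u v)) ->
  K s -> exists q, K q /\ adj s q = 0 /\ adj q s = 0.
Proof.
move=> KB KM Ks.
have rinv : forall s, K s -> exists q, K q /\ adj s q = 0.
  move=> t Kt.
  have [q [Kq Hq]] := solve_lin Hn KB (fun u Ku => KM t u Kt Ku) (KN KB Kt).
  by exists q; split => //; rewrite /Defs.adj -addrA Hq subrr.
have [q [Kq Hq]] := rinv s Ks.
have [q' [Kq' Hq']] := rinv q Kq.
exists q; split => //; split => //.
suff -> : s = q' by [].
by rewrite -(adj0r Hn s) -Hq' -adjA // Hq adj0l.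
Qed.

Lemma I_adj i j : I i -> I j -> I (adj i j).
Proof.
move=> Ii Ij; rewrite /Defs.adj.
exact: (KD (idB HI) (KD (idB HI) Ii Ij) (idMl HI i Ij)).
Qed.
Lemma S_adj i j : S i -> S j -> S (adj i j).
Proof.
move=> Ii Ij; rewrite /Defs.adj.
exact: (KD (srB HS) (KD (srB HS) Ii Ij) (srM HS Ii Ij)).
Qed.

Lemma decomp_ex x : exists p : N * N, S p.1 /\ I p.2 /\ x = adj p.1 p.2.
Proof.
have [s [i' [Ss [Ii' ->]]]] := Hsum x.
have [i [Ii Hi]] := solve_lin Hn (idB HI) (idMl HI s) Ii'.
by exists (s, i); split => //; split => //=; rewrite /Defs.adj -addrA Hi.
Qed.

Lemma decomp_uniq s1 i1 s2 i2 : S s1 -> I i1 -> S s2 -> I i2 ->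
  adj s1 i1 = adj s2 i2 -> s1 = s2 /\ i1 = i2.
Proof.
move=> S1 I1 S2 I2 E.
have Hs : s1 = s2.
  apply: subr0_eq; apply: HSI; first exact: (srB HS).
  have -> : s1 - s2 = (i2 + mul s2 i2) - (i1 + mul s1 i1).
    have E' : s1 + (i1 + mul s1 i1) = s2 + (i2 + mul s2 i2) by rewrite !addrA.
    move: (i1 + mul s1 i1) (i2 + mul s2 i2) E' => a b E'.
    by rewrite -(addrKA a s1 s2) E' (addrC a s2) (addrC s2 b) addrKA.
  apply: (idB HI); apply: (KD (idB HI) I2 (idMl HI _ I2)) || apply: (KD (idB HI) I1 (idMl HI _ I1)).
split => //; subst s2.
have [q [_ [_ Hq]]] := adj_inv (K := fun _ => True) (s := s1) (fun _ _ _ _ => Logic.I) (fun _ _ _ _ => Logic.I) Logic.I.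
by rewrite -(adj0l Hn i1) -(adj0l Hn i2) -Hq !adjA // E.
Qed.

Lemma decomp_spec x : S (decomp mul S I x).1 /\ I (decomp mul S I x).2 /\
  x = adj (decomp mul S I x).1 (decomp mul S I x).2.
Proof. exact: (epsilon_spec _ _ (decomp_ex x)). Qed.

Lemma decomp_eq s i : S s -> I i -> decomp mul S I (adj s i) = (s, i).
Proof.
move=> Ss Ii; have [H1 [H2 H3]] := decomp_spec (adj s i).
move: H1 H2 H3; case: (decomp _ _ _ _) => a b /= H1 H2 H3.
by have [-> ->] := decomp_uniq H1 H2 Ss Ii (esym H3).
Qed.


Definition Lf s i u := u + mul s u + mul u i + mul (mul s u) i.

Lemma T_L s i u : adj (adj s u) i = adj s i + Lf s i u.
Proof.
rewrite /Defs.adj /Lf !mDl !addrA.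
by rewrite [LHS](ACl (1*4*5*2*3*6*7)%AC).
Qed.

Lemma LfD s i u v : Lf s i (u + v) = Lf s i u + Lf s i v.
Proof.
rewrite /Lf !mDr !mDl !addrA.
by rewrite [RHS](ACl (1*5*2*6*3*7*4*8)%AC).

Qed.

Lemma Lf0 s i : Lf s i 0 = 0.
Proof. by apply: (addrI (Lf s i 0)); rewrite -LfD !addr0. Qed.

Lemma LfB s i u v : Lf s i (u - v) = Lf s i u - Lf s i v.
Proof.
apply: (addIr (Lf s i v)); by rewrite -LfD !subrK.
Qed.

Local Notation dec := (decomp mul S I).
Local Notation sig := (sigma mul S I).
Local Notation bl := (bul mul S I).

Lemma sigmaE x y : sig x y = Lf (dec x).1 (dec x).2 y.
Proof.
have [_ [_ Hx]] := decomp_spec x.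
by rewrite /sigma /bul T_L -Hx addrC addKr.
Qed.

Lemma bulE a b : bl a b = a + sig a b.
Proof. by rewrite /sigma subrKC. Qed.

Lemma sigma0 z : sig 0 z = z.
Proof.
rewrite sigmaE.
have -> : dec 0 = (0, 0).
  by rewrite -{1}(adj0l Hn 0); apply: decomp_eq; [exact: (sr0 HS) | exact: (id0 HI)].
by rewrite /Lf /= !(mul0l Hn) (mul0r Hn) !addr0.
Qed.

Lemma T_comp s i s' i' z :
  adj (adj s (adj (adj s' z) i')) i = adj (adj (adj s s') z) (adj i' i).
Proof. by rewrite -!adjA. Qed.

Lemma sigma_comp a b z : sig a (sig b z) = sig (bl a b) z.
Proof.
have [Sa [Ia Ha]] := decomp_spec a.
have [Sb [Ib Hb]] := decomp_spec b.
move: Sa Ia Ha Sb Ib Hb.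
rewrite !sigmaE /bul.
case: (dec a) => s i; case: (dec b) => s' i' /= Sa Ia Ha Sb Ib Hb.
have -> : adj (adj s b) i = adj (adj s s') (adj i' i) by rewrite Hb -!(adjA Hn).
rewrite decomp_eq /=; last 2 first.
- exact: S_adj.
- exact: I_adj.
have Tz := T_comp s i s' i' z.
have T0 := T_comp s i s' i' 0.
rewrite (T_L s i) (T_L s' i') LfD (T_L (adj s s')) in Tz.
rewrite (T_L s i) (T_L s' i') LfD (T_L (adj s s')) in T0.
rewrite !Lf0 !addr0 in T0.
rewrite addrA T0 in Tz.
exact: (addrI _ Tz).
Qed.

Lemma binv_ex b : exists p, bl p b = 0 /\ bl b p = 0.
Proof.
have [Sb [Ib Hb]] := decomp_spec b.
move: Sb Ib Hb; rewrite /bul.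
case: (dec b) => s i /= Ss Ii Hb.
have [s' [Ss' [H1 H2]]] := adj_inv (srB HS) (srM HS) Ss.
have [i' [Ii' [H3 H4]]] := adj_inv (idB HI) (fun u v _ Kv => idMl HI u Kv) Ii.
exists (adj s' i'); rewrite decomp_eq //=; split.
- by rewrite Hb -(adjA Hn s') H2 (adj0l Hn) H3.
- by rewrite -(adjA Hn s) H1 (adj0l Hn) H4.
Qed.

Lemma binv_spec b : bl (binv mul S I b) b = 0 /\ bl b (binv mul S I b) = 0.
Proof. exact: (epsilon_spec _ _ (binv_ex b)). Qed.

Lemma sigma_invl c w : sig (binv mul S I c) (sig c w) = w.
Proof. by rewrite sigma_comp (proj1 (binv_spec c)) sigma0. Qed.
Lemma sigma_invr c w : sig c (sig (binv mul S I c) w) = w.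
Proof. by rewrite sigma_comp (proj2 (binv_spec c)) sigma0. Qed.

Lemma tauE v x : tau mul S I v x = sig (binv mul S I (sig x v)) x.
Proof. by []. Qed.

Lemma sigma_tau x v : sig (sig x v) (tau mul S I v x) = x.
Proof. by rewrite tauE sigma_invr. Qed.

Lemma tau_tau x y : tau mul S I (tau mul S I y x) (sig x y) = y.
Proof. by rewrite tauE sigma_tau sigma_invl. Qed.


Variable J : N -> Prop.
Hypothesis HJ : is_ideal mul J.
Hypothesis HJI : forall x, J x -> I x.

Let JB := idB HJ.
Let JD := KD JB.

Lemma sigma_J x j : J j -> J (sig x j).
Proof.
move=> Jj; rewrite sigmaE /Lf.
apply: JD; last by apply: (idMr HJ); apply: (idMl HJ).
apply: JD; last by apply: (idMr HJ).
by apply: JD => //; apply: (idMl HJ).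
Qed.

Lemma sigma_B x u v : sig x (u - v) = sig x u - sig x v.
Proof. by rewrite !sigmaE LfB. Qed.

Lemma sigma_J0 q z : J q -> J (sig q z - z).
Proof.
move=> Jq; rewrite sigmaE.
have -> : dec q = (0, q).
  by rewrite -{1}(adj0l Hn q); apply: decomp_eq; [exact: (sr0 HS) | exact: HJI].
rewrite /Lf /= !(mul0l Hn) !addr0 addrC addKr.
exact: (idMl HJ).
Qed.

Lemma sigma_shift w j z : J j -> J (sig (w + j) z - sig w z).
Proof.
move=> Jj.
have [Ss [Ii Hw]] := decomp_spec w.
have [j' [Jj' Hj']] := solve_lin Hn JB (idMl HJ w) Jj.
have Ewj : w + j = adj (dec w).1 (adj (dec w).2 j').
  by rewrite -(adjA Hn) -Hw /Defs.adj -Hj' addrA.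
rewrite /sigma /bul Ewj decomp_eq //=; last by apply: I_adj => //; exact: HJI.
rewrite -Ewj -(adjA Hn).
move: (adj (adj (dec w).1 z) (dec w).2) => t.
have -> : adj t j' - (w + j) - (t - w) = mul t j' - mul w j'.
  rewrite -Hj' /Defs.adj !opprD !addrA ?opprK ?addrA.
  rewrite [LHS](ACl (1*7*2*5*4*8*3*6)%AC) /=.
  by rewrite subrr add0r subrr add0r addNr add0r.
by apply: JB; apply: (idMl HJ).
Qed.

Lemma sigma_congr w w' z : J (w' - w) -> J (sig w' z - sig w z).
Proof. by move=> H; rewrite -(subrKC w w'); apply: sigma_shift. Qed.

Lemma tau_congr x v v' : J (v' - v) -> J (tau mul S I v' x - tau mul S I v x).
Proof.
move=> Jv; rewrite !tauE.
have Jw : J (sig x v' - sig x v) by rewrite -sigma_B; apply: sigma_J.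
move: Jw; set w := sig x v; set w' := sig x v' => Jw.
set p := binv mul S I w; set p' := binv mul S I w'.
rewrite -[sig p x](sigma_invl w') (sigma_comp w' p x) -/p' -sigma_B.
apply: sigma_J.
have Jq : J (bl w' p).
  have E0 : bl w p = 0 by exact: (proj2 (binv_spec w)).
  rewrite -(subr0 (bl w' p)) -E0 !bulE opprD addrACA.
  by apply: JD => //; apply: sigma_congr.
by rewrite -opprB; apply: (KN JB); apply: sigma_J0.
Qed.

Lemma refl_main (X : N -> Prop) (f g : N -> N) (wedge : N -> N -> N) :
  is_solution X (ybr mul S I) ->
  (forall x, J x -> X x) ->
  (forall x, X x -> X (f x)) -> (forall x, X x -> X (g x)) ->
  (forall x y, X x -> X y -> X (wedge x y)) ->
  (forall x y, X x -> X y -> f (sig x y) = sig x (f y)) ->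
  (forall x y z, X x -> X y -> X z ->
     sig x (wedge y (g z)) = wedge (sig x y) (g z)) ->
  (forall x j, X x -> J j -> X (x + j) -> g (x + j) = g x) ->
  (forall x, X x -> J (wedge (f x) (g x) - x)) ->
  is_reflection X (ybr mul S I) (fun x => wedge (f x) (g x)).
Proof.
move=> [HX _] _ Xf Xg Xwe Hf Hw Hg Hk.
set k := fun x => wedge (f x) (g x).
have Xk : forall x, X x -> X (k x) by move=> x Xx; apply: Xwe; [apply: Xf | apply: Xg].
have Xs : forall x y, X x -> X y -> X (sig x y) by move=> x y Xx Xy; exact: (proj1 (HX x y Xx Xy)).
have Xt : forall x y, X x -> X y -> X (tau mul S I y x) by move=> x y Xx Xy; exact: (proj2 (HX x y Xx Xy)).
have gJ : forall a b, X a -> X b -> J (a - b) -> g a = g b.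
  by move=> a b Xa Xb Jab; rewrite -(subrKC b a) Hg // subrKC.
have sk : forall u w, X u -> X w -> sig u (k w) = wedge (f (sig u w)) (g w).
  by move=> u w Xu Xw; rewrite /k Hw ?Hf //; apply: Xf.
move=> x y Xx Xy; rewrite /ybr /idk /=.
set u := sig x (k y); set t' := tau mul S I (k y) x.
set a := sig x y; set b := tau mul S I y x.
have Xu : X u by apply: Xs => //; apply: Xk.
have Xt' : X t' by apply: Xt => //; apply: Xk.
have Xa : X a by apply: Xs.
have Xb : X b by apply: Xt.
have Hc : sig u (k t') = sig a (k b).
  rewrite !sk // sigma_tau /u /t' sigma_tau; congr (wedge _ _).
  by apply: gJ => //; apply: tau_congr; apply: Hk.
rewrite Hc; congr (_, _).
set c := sig a (k b).
have Xc : X c by apply: Xs => //; apply: Xk.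
rewrite !tauE Hc -/c.
set w := sig (binv mul S I c) a.
have Xw' : X w by rewrite /w /c -tauE; apply: Xt => //; apply: Xk.
have Hcw : sig c w = a by rewrite /w sigma_invr.
have -> : u = sig c (wedge (f w) (g y)).
  by rewrite /u sk // -/a -Hcw Hf // Hw //; apply: Xf.
rewrite sigma_invl /k; congr (wedge _ _).
apply: esym; apply: gJ => //.
have -> : y = tau mul S I b a by rewrite tau_tau.
rewrite /w /c -tauE.
by apply: tau_congr; apply: Hk.
Qed.

End Brace.

Theorem mainTheorem9 (N : zmodType) (mul : N -> N -> N)
  (S I X J : N -> Prop) (f g : N -> N) (wedge : N -> N -> N) :
  nilpotent_ring mul ->
  is_subring mul S -> is_ideal mul I ->
  (forall x, S x -> I x -> x = 0) ->
  (forall x, exists s i, S s /\ I i /\ x = s + i) ->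
  is_solution X (ybr mul S I) ->
  is_ideal mul J -> (forall x, J x -> I x /\ X x) ->
  (forall x, X x -> X (f x)) -> (forall x, X x -> X (g x)) ->
  (forall x y, X x -> X y -> X (wedge x y)) ->
  (* f is G(X,r)-equivariant *)
  (forall x y, X x -> X y -> f (sigma mul S I x y) = sigma mul S I x (f y)) ->
  (forall x y z, X x -> X y -> X z ->
     sigma mul S I x (wedge y (g z)) = wedge (sigma mul S I x y) (g z)) ->
  (forall x j, X x -> J j -> X (x + j) -> g (x + j) = g x) ->
  (forall x, X x -> J (wedge (f x) (g x) - x)) ->
  (forall x, exists! p : N * N, S p.1 /\ I p.2 /\ x = adj mul p.1 p.2) /\
  is_reflection X (ybr mul S I) (fun x => wedge (f x) (g x)).
Proof.
move=> Hn HS HI HSI Hsum Hsol HJ HJX Xf Xg Xw Hf Hw Hg Hk.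
split.
- move=> x; have [p [H1 [H2 H3]]] := decomp_ex Hn HI Hsum x.
  exists p; split => // -[s i] /= [Hs [Hi E]].
  move: H1 H2 H3; case: p => s' i' /= H1 H2 H3.
  have [-> ->] := decomp_uniq Hn HS HI HSI H1 H2 Hs Hi (etrans (esym H3) E).
  by [].
- have HJI : forall x, J x -> I x by move=> x /HJX [].
  have HJXX : forall x, J x -> X x by move=> x /HJX [].
  exact: (refl_main Hn HS HI HSI Hsum HJ HJI Hsol HJXX Xf Xg Xw Hf Hw Hg Hk).
Qed.
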